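(* Let $P$ be a finite subset of a metric space with metric $\|\cdot-\cdot\|$, let $Q\subseteq P$ be finite, let $\rho\ge 0$ and let $t\ge 1$ be an integer. Let $M$ be the set of critical simplices of the filtered relaxed Delaunay complex $\mathrm{Del}^\rho(Q,P)$ (with filtration defined below). For every $x\in P$ and $\ell\in\{1,\ldots,|Q|\}$ let $D(x,\ell)$ be the $\ell$-th nearest neighbor of $x$ in $Q$ (ties broken arbitrarily); for $i\in\{0,1,\ldots,t\}$ let $\ell_x^i$ be the largest integer $\ell$ such that $\bigl|\|x-D(x,1)\|-\|x-D(x,\ell)\|\bigr|\le\rho i/t$, let $\sigma_x^i=\{D(x,1),D(x,2),\ldots,D(x,\ell_x^i)\}$, and let $W=\{\sigma_x^i : x\in P,\ i\in\{0,1,\ldots,t\}\}$. Then $M\subseteq W$.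
   Context: For $r\ge 0$, the relaxed Delaunay complex $\mathrm{Del}^r(Q,P)$ is the simplicial complex with vertex set $Q$ in which a simplex $\sigma=\{q_0,\ldots,q_s\}\subseteq Q$ belongs to $\mathrm{Del}^r(Q,P)$ iff there exists $x\in P$ such that $\|x-q_j\|\le\|x-q\|+r$ for all $q_j\in\sigma$ and all $q\in Q$. The filtration on $\mathrm{Del}^\rho(Q,P)$ takes values in $\{0,1,\ldots,t\}$: the filtration value $f(\sigma)$ of $\sigma\in\mathrm{Del}^\rho(Q,P)$ is the smallest $i\in\{0,\ldots,t\}$ such that $\sigma\in\mathrm{Del}^{\rho i/t}(Q,P)$. A simplex $\sigma$ is critical if $f(\sigma)<f(\tau)$ for every proper coface $\tau\supsetneq\sigma$ in the complex. *)

(* Defs.v *)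
From HB Require Import structures.
From mathcomp Require Import all_boot all_order all_algebra.
From mathcomp Require Import finmap.
From mathcomp Require Import reals.
Set Implicit Arguments. Unset Strict Implicit. Unset Printing Implicit Defensive.
Import Order.TTheory GRing.Theory Num.Theory.
Local Open Scope ring_scope.

Section Defs.
Variables (R : realType) (T : choiceType) (dist : T -> T -> R).

Definition is_metric : Prop :=
  [/\ forall x y, 0 <= dist x y,
      forall x y, dist x y = 0 <-> x = y,
      forall x y, dist x y = dist y x
    & forall x y z, dist x z <= dist x y + dist y z].

Definition in_Del (r : R) (Q P sigma : {fset T}) : bool :=
  [&& (sigma `<=` Q)%fset, sigma != fset0%fset &
      has (fun x => all (fun qj => all (fun q => dist x qj <= dist x q + r)
                                       (enum_fset Q))
                        (enum_fset sigma))
          (enum_fset P)].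

Definition filt (rho : R) (t : nat) (Q P sigma : {fset T}) : nat :=
  find (fun i : nat => in_Del (rho * i%:R / t%:R) Q P sigma) (iota 0 t.+1).

Definition critical (rho : R) (t : nat) (Q P sigma : {fset T}) : Prop :=
  in_Del rho Q P sigma /\
  forall tau : {fset T}, in_Del rho Q P tau -> (sigma `<` tau)%fset ->
    (filt rho t Q P sigma < filt rho t Q P tau)%N.

(* D x is the list of points of Q ordered by nearest-neighbour rank from x:
   D(x, l) = nth x (D x) l.-1 (1-indexed). *)
Definition nn_order (Q : {fset T}) (x : T) (s : seq T) : Prop :=
  perm_eq s (enum_fset Q) /\ sorted (fun a b => dist x a <= dist x b) s.

Definition ell (rho : R) (t : nat) (Q : {fset T}) (D : T -> seq T) (x : T) (i : nat) : nat :=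
  \max_(l < #|` Q|%fset.+1 | (1 <= (l : nat))%N &&
        (`|dist x (nth x (D x) 0) - dist x (nth x (D x) (l : nat).-1)|
           <= rho * i%:R / t%:R)) (l : nat).

Definition sigma_xi (rho : R) (t : nat) (Q : {fset T}) (D : T -> seq T) (x : T) (i : nat) : {fset T} :=
  [fset y | y in take (ell rho t Q D x i) (D x)]%fset.

End Defs.

(* Main.v *)
Require Import Defs.
From HB Require Import structures.
From mathcomp Require Import all_boot all_order all_algebra.
From mathcomp Require Import finmap.
From mathcomp Require Import reals.
Import Order.TTheory GRing.Theory Num.Theory.
Local Open Scope ring_scope.

Lemma in_Del_mono (R : realType) (T : choiceType) (dist : T -> T -> R) r r' Q P s :
  r <= r' -> in_Del dist r Q P s -> in_Del dist r' Q P s.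
Proof.
move=> le /and3P[h1 h2 /hasP[x xP /allP H]]; apply/and3P; split => //.
apply/hasP; exists x => //; apply/allP => y ys; apply/allP => q qQ.
have := allP (H y ys) q qQ => h; apply: (le_trans h); by rewrite lerD2l.
Qed.

Lemma find_le (p : pred nat) t i : (i <= t)%N -> p i -> (find p (iota 0 t.+1) <= i)%N.
Proof.
move=> it pi; rewrite leqNgt; apply/negP => /(before_find 0).
by rewrite nth_iota ?ltnS // add0n pi.
Qed.

Theorem lemma5 (R : realType) (T : choiceType) (dist : T -> T -> R)
  (Hmetric : is_metric dist)
  (P Q : {fset T}) (HQP : (Q `<=` P)%fset)
  (rho : R) (Hrho : 0 <= rho) (t : nat) (Ht : (1 <= t)%N)
  (D : T -> seq T) (HD : forall x, x \in P -> nn_order dist Q x (D x)) :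
  forall sigma : {fset T}, critical dist rho t Q P sigma ->
    exists2 x, x \in P &
      exists2 i : nat, (i <= t)%N & sigma = sigma_xi dist rho t Q D x i.
Proof.
move=> sigma [Hsig Hcrit].
set p := fun i : nat => in_Del dist (rho * i%:R / t%:R) Q P sigma.
have tn0 : (t%:R : R) != 0 by rewrite pnatr_eq0 -lt0n.
have hasp : has p (iota 0 t.+1).
  apply/hasP; exists t; last by rewrite /p mulfK.
  by rewrite mem_iota add0n ltnSn.
set i := find p (iota 0 t.+1).
have it : (i <= t)%N by have := hasp; rewrite has_find size_iota.
have pi : p i by have := nth_find 0 hasp; rewrite nth_iota // add0n.
set r := rho * i%:R / t%:R.
have r0 : 0 <= r by rewrite divr_ge0 // mulr_ge0.
have rrho : r <= rho.
  rewrite /r -mulrA -[leRHS]mulr1; apply: ler_wpM2l => //.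
  by rewrite ler_pdivrMr ?ltr0n // mul1r ler_nat.
move: (pi); rewrite /p -/r => /and3P[sQ sn0 /hasP[x xP /allP Hx]].
have Hx' : forall qj q, qj \in sigma -> q \in Q -> dist x qj <= dist x q + r.
  by move=> qj q qs qQ; exact: (allP (Hx qj qs) q qQ).
have [Hperm Hsort] := HD x xP.
set s := D x.
have ms : forall y, (y \in s) = (y \in Q) by move=> y; rewrite (perm_mem Hperm).
have sz : size s = #|` Q|%fset by rewrite (perm_size Hperm).
have Qn0 : (0 < size s)%N.
  have [y ys] : exists y, y \in sigma.
    exact/fset0Pn.
  by rewrite -has_predT; apply/hasP; exists y => //; rewrite ms (fsubsetP sQ).
have mono : forall a b, (a <= b < size s)%N -> dist x (nth x s a) <= dist x (nth x s b).
  move=> a b /andP[ab bs]; apply: (sorted_leq_nth _ _ x Hsort) => //.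
  - by move=> ? ? ? ; apply: le_trans.
  - by rewrite inE (leq_ltn_trans ab).
set d1 := dist x (nth x s 0).
have d1min : forall q, q \in Q -> d1 <= dist x q.
  move=> q qQ; rewrite -ms in qQ; rewrite -(nth_index x qQ); apply: mono.
  by rewrite leq0n index_mem.
have condE : forall k, (k < size s)%N ->
   (`|d1 - dist x (nth x s k)| <= r) = (dist x (nth x s k) <= d1 + r).
  move=> k ks; have := mono 0%N k; rewrite leq0n ks => /(_ isT) h.
  by rewrite distrC ger0_norm ?subr_ge0 // lerBlDl addrC.
set L := ell dist rho t Q D x i.
set A := [pred l : 'I_(#|` Q|%fset.+1) | (1 <= (l : nat))%N &&
        (`|dist x (nth x (D x) 0) - dist x (nth x (D x) (l : nat).-1)| <= r)].
have eL : L = \max_(l in A) (l : nat) by [].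
have HA : forall k, (k < size s)%N -> dist x (nth x s k) <= d1 + r -> (k < L)%N.
  move=> k ks hk; rewrite eL.
  have kQ : (k.+1 < #|` Q|%fset.+1)%N by rewrite ltnS -sz.
  apply: (@leq_bigmax_cond _ A (fun l => (l : nat)) (Ordinal kQ)).
  by rewrite /A /= -/s -/d1 condE.
have L1 : (0 < L)%N by apply: HA => //; rewrite /d1 lerDl.
have HB : forall k, (k < L)%N -> (k < size s)%N /\ dist x (nth x s k) <= d1 + r.
  move=> k kL.
  have A0 : (0 < #|A|)%N.
    have oQ : (1 < #|` Q|%fset.+1)%N by rewrite ltnS -sz.
    apply/card_gt0P; exists (Ordinal oQ).
    by rewrite /A inE /= -/s -/d1 subrr normr0.
  have [l0 l0A eL0] := @eq_bigmax_cond _ A (fun l => (l : nat)) A0.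
  move: l0A; rewrite /A inE /= -/s -/d1 => /andP[l01 cl0].
  have l0s : (l0.-1 < size s)%N.
    by rewrite sz prednK //; have := ltn_ord l0; rewrite ltnS.
  have kl0 : (k <= l0.-1)%N by rewrite -ltnS prednK // -eL0 -eL.
  have ks : (k < size s)%N by apply: leq_ltn_trans l0s.
  split => //; apply: le_trans (mono k l0.-1 _) _; first by rewrite kl0.
  by rewrite -condE.
set tau := sigma_xi dist rho t Q D x i.
have mt1 : forall k, (k < L)%N -> nth x s k \in tau.
  move=> k kL; have [ks _] := HB k kL.
  rewrite /tau /sigma_xi -/L -/s inE -(nth_take x kL); apply: mem_nth.
  by rewrite size_take; case: ifP.
have mt2 : forall y, y \in tau -> exists2 k, (k < L)%N & y = nth x s k.
  move=> y; rewrite /tau /sigma_xi -/L -/s inE => yt.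
  have yi : (index y (take L s) < size (take L s))%N by rewrite index_mem.
  have sL : (size (take L s) <= L)%N.
    by rewrite size_take; case: ifP => // /negbT; rewrite -leqNgt.
  have yL := leq_trans yi sL.
  by exists (index y (take L s)) => //; rewrite -(nth_take x yL) nth_index.
have s0Q : nth x s 0 \in Q by rewrite -ms mem_nth.
have sub : (sigma `<=` tau)%fset.
  apply/fsubsetP => qj qjs; have qjQ := fsubsetP sQ qj qjs.
  rewrite -ms in qjQ; rewrite -(nth_index x qjQ); apply: mt1; apply: HA.
    by rewrite index_mem.
  by rewrite nth_index //; apply: Hx'.
have tauD : in_Del dist r Q P tau.
  apply/and3P; split.
  - apply/fsubsetP => y /mt2 [k kL ->]; have [ks _] := HB k kL.
    by rewrite -ms mem_nth.
  - by apply/fset0Pn; exists (nth x s 0); apply: mt1.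
  - apply/hasP; exists x => //; apply/allP => y /mt2 [k kL ->].
    apply/allP => q qQ; have [_ hk] := HB k kL.
    by apply: le_trans hk _; rewrite lerD2r d1min.
have ftau : (filt dist rho t Q P tau <= i)%N by apply: find_le.
exists x => //; exists i => //.
have [//|neq] := eqVneq sigma tau.
have := Hcrit tau (@in_Del_mono _ _ _ _ _ _ _ _ rrho tauD).
rewrite fproperEneq neq sub => /(_ isT).
by rewrite ltnNge ftau.
Qed.
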